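(* Let $\mathcal{A}$ be an abelian category. (1) Let $0\to N_1\to N\to N_2\to 0$ be a short exact sequence and $M$ an object of $\mathcal{A}$ such that $N_1$ and $N_2$ are strongly $M$-Rickart. Then $N$ is strongly $M$-Rickart. (2) Let $0\to M_1\to M\to M_2\to 0$ be a short exact sequence and $N$ an object of $\mathcal{A}$ such that $N$ is dual strongly $M_1$-Rickart and dual strongly $M_2$-Rickart. Then $N$ is dual strongly $M$-Rickart.
   Context: A morphism $f:X\to Y$ is a section if $f'f=1_X$ for some $f'$, a retraction if $ff'=1_Y$ for some $f'$. A monomorphism $k:K\to X$ is fully invariant if for every $h:X\to X$ there is $\alpha:K\to K$ with $hk=k\alpha$; an epimorphism $c:X\to C$ is fully coinvariant if for every $h:X\to X$ there is $\gamma:C\to C$ with $ch=\gamma c$. For objects $M,N$: $N$ is strongly $M$-Rickart if the kernel of every morphism $f:M\to N$ is a fully invariant section; $N$ is dual strongly $M$-Rickart if the cokernel of every morphism $f:M\to N$ is a fully coinvariant retraction. *)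

(* Defs.v *)
From HB Require Import structures.
From mathcomp Require Import all_boot all_algebra.
Set Implicit Arguments. Unset Strict Implicit. Unset Printing Implicit Defensive.
Import GRing.Theory.
Local Open Scope ring_scope.

Record PreaddCat := {
  ob :> Type;
  hom : ob -> ob -> zmodType;
  idm : forall a, hom a a;
  comp : forall a b c, hom b c -> hom a b -> hom a c;
  compA : forall a b c d (h : hom c d) (g : hom b c) (f : hom a b),
      comp h (comp g f) = comp (comp h g) f;
  comp1m : forall a b (f : hom a b), comp (idm b) f = f;
  compm1 : forall a b (f : hom a b), comp f (idm a) = f;
  compDl : forall a b c (g g' : hom b c) (f : hom a b),
      comp (g + g') f = comp g f + comp g' f;
  compDr : forall a b c (g : hom b c) (f f' : hom a b),
      comp g (f + f') = comp g f + comp g f'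
}.

Arguments idm {_} a.
Arguments comp {_ a b c}.
Arguments hom {_}.

Section Notions.
Variable C : PreaddCat.

Definition is_mono {a b : C} (f : hom a b) : Prop :=
  forall w (g h : hom w a), comp f g = comp f h -> g = h.

Definition is_epi {a b : C} (f : hom a b) : Prop :=
  forall w (g h : hom b w), comp g f = comp h f -> g = h.

Definition is_kernel {x y k : C} (f : hom x y) (kk : hom k x) : Prop :=
  comp f kk = 0 /\
  forall w (g : hom w x), comp f g = 0 ->
    exists u : hom w k, comp kk u = g /\ forall u' : hom w k, comp kk u' = g -> u' = u.

Definition is_cokernel {x y q : C} (f : hom x y) (cc : hom y q) : Prop :=
  comp cc f = 0 /\
  forall w (g : hom y w), comp g f = 0 ->
    exists u : hom q w, comp u cc = g /\ forall u' : hom q w, comp u' cc = g -> u' = u.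

Definition is_zero_object (z : C) : Prop :=
  forall a, (forall f g : hom z a, f = g) /\ (forall f g : hom a z, f = g).

Definition is_product (a b p : C) (p1 : hom p a) (p2 : hom p b) : Prop :=
  forall w (f : hom w a) (g : hom w b),
    exists u : hom w p, (comp p1 u = f /\ comp p2 u = g) /\
      forall u' : hom w p, comp p1 u' = f -> comp p2 u' = g -> u' = u.

Definition is_abelian : Prop :=
  (exists z : C, is_zero_object z) /\
  (forall a b : C, exists p (p1 : hom p a) (p2 : hom p b), is_product p1 p2) /\
  (forall (x y : C) (f : hom x y), exists k (kk : hom k x), is_kernel f kk) /\
  (forall (x y : C) (f : hom x y), exists q (cc : hom y q), is_cokernel f cc) /\
  (forall (k x : C) (m : hom k x), is_mono m ->
      exists y (f : hom x y), is_kernel f m) /\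
  (forall (y q : C) (e : hom y q), is_epi e ->
      exists x (f : hom x y), is_cokernel f e).

Definition short_exact {a b c : C} (f : hom a b) (g : hom b c) : Prop :=
  is_kernel g f /\ is_cokernel f g.

Definition is_section {a b : C} (f : hom a b) : Prop :=
  exists f' : hom b a, comp f' f = idm a.

Definition is_retraction {a b : C} (f : hom a b) : Prop :=
  exists f' : hom b a, comp f f' = idm b.

Definition fully_invariant {k x : C} (kk : hom k x) : Prop :=
  forall h : hom x x, exists alpha : hom k k, comp h kk = comp kk alpha.

Definition fully_coinvariant {x c : C} (cc : hom x c) : Prop :=
  forall h : hom x x, exists gamma : hom c c, comp cc h = comp gamma cc.

(* N is strongly M-Rickart: the kernel of every f : M -> N is a fully
   invariant section (kernels are unique up to iso, and both properties are
   iso-invariant, so we quantify over all kernels; every kernel is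
   automatically mono). *)
Definition strongly_rickart (M N : C) : Prop :=
  forall (f : hom M N) (K : C) (k : hom K M),
    is_kernel f k -> is_section k /\ fully_invariant k.

Definition dual_strongly_rickart (M N : C) : Prop :=
  forall (f : hom M N) (Q : C) (c : hom N Q),
    is_cokernel f c -> is_retraction c /\ fully_coinvariant c.

End Notions.

(* Main.v *)
Require Import Defs.
From mathcomp Require Import all_boot ssralg.
Import GRing.Theory.
Local Open Scope ring_scope.
Set Implicit Arguments. Unset Strict Implicit.

Lemma comp0m (C : PreaddCat) (a b c : C) (f : hom a b) :
  Defs.comp (0 : hom b c) f = 0.
Proof.
have H := compDl (0 : hom b c) 0 f. rewrite addr0 in H.
by apply/eqP; rewrite -(subrr (Defs.comp (0 : hom b c) f)) {2}H addrK.
Qed.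

Lemma compm0 (C : PreaddCat) (a b c : C) (g : hom b c) :
  Defs.comp g (0 : hom a b) = 0.
Proof.
have H := compDr g (0 : hom a b) 0. rewrite addr0 in H.
by apply/eqP; rewrite -(subrr (Defs.comp g (0 : hom a b))) {2}H addrK.
Qed.

Lemma kernel_mono (C : PreaddCat) (x y k : C) (f : hom x y) (kk : hom k x) :
  is_kernel f kk -> is_mono kk.
Proof.
move=> [H0 H] w g h E.
have Z : Defs.comp f (Defs.comp kk g) = 0 by rewrite Defs.compA H0 comp0m.
have [u [_ U]] := H _ _ Z.
by rewrite (U g erefl) (U h (esym E)).
Qed.

Lemma cokernel_epi (C : PreaddCat) (x y q : C) (f : hom x y) (cc : hom y q) :
  is_cokernel f cc -> is_epi cc.
Proof.
move=> [H0 H] w g h E.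
have Z : Defs.comp (Defs.comp g cc) f = 0 by rewrite -Defs.compA H0 compm0.
have [u [_ U]] := H _ _ Z.
by rewrite (U g erefl) (U h (esym E)).
Qed.

Theorem theorem2p19 (A : PreaddCat) (HA : is_abelian A) :
  (forall (N1 N N2 M : A) (f : hom N1 N) (g : hom N N2),
      short_exact f g ->
      strongly_rickart M N1 -> strongly_rickart M N2 ->
      strongly_rickart M N) /\
  (forall (M1 M M2 N : A) (f : hom M1 M) (g : hom M M2),
      short_exact f g ->
      dual_strongly_rickart M1 N -> dual_strongly_rickart M2 N ->
      dual_strongly_rickart M N).
Proof.
have [_ [_ [Hker [Hcok _]]]] := HA.
split.
- move=> N1 N N2 M f g [kerf cokg] R1 R2 phi K k kerk.
  have fmono := kernel_mono kerf.
  have kmono := kernel_mono kerk.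
  have [K2 [k2 kk2]] := Hker _ _ (Defs.comp g phi).
  have [[e ek2] fi2] := R2 _ _ _ kk2.
  have gpk2 : Defs.comp g (Defs.comp phi k2) = 0 by rewrite Defs.compA; exact: kk2.1.
  have [psi [fpsi _]] := kerf.2 _ _ gpk2.
  have [K' [k' kk']] := Hker _ _ (Defs.comp psi e).
  have [[e' ek'] fi'] := R1 _ _ _ kk'.
  have gpk : Defs.comp (Defs.comp g phi) k = 0 by rewrite -Defs.compA kerk.1 compm0.
  have [a [k2a _]] := kk2.2 _ _ gpk.
  have ek : Defs.comp e k = a by rewrite -k2a Defs.compA ek2 comp1m.
  have psia : Defs.comp psi a = 0.
    apply fmono; rewrite compm0 Defs.compA fpsi -Defs.compA k2a; exact: kerk.1.
  have pek : Defs.comp (Defs.comp psi e) k = 0 by rewrite -Defs.compA ek.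
  have [b [k'b _]] := kk'.2 _ _ pek.
  have pek' : Defs.comp psi (Defs.comp e k') = 0 by rewrite Defs.compA; exact: kk'.1.
  split.
  + pose t := Defs.comp k2 (Defs.comp e (Defs.comp k' (Defs.comp e' (Defs.comp k2 e)))).
    have Ht : Defs.comp phi t = 0.
      rewrite /t Defs.compA -fpsi -Defs.compA (Defs.compA psi). by rewrite (Defs.compA _ k') kk'.1 comp0m compm0.
    have [s [ks _]] := kerk.2 _ _ Ht.
    exists s; apply kmono; rewrite Defs.compA ks compm1 /t.
    rewrite -!Defs.compA ek k2a -k'b (Defs.compA e' k' b) ek' comp1m.
    by rewrite k'b ek k2a.
  + move=> h.
    have [al Hal] := fi2 h.
    have [al' Hal'] := fi' h.
    have Z : Defs.comp phi (Defs.comp h k) = 0.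
      have ehk : Defs.comp e (Defs.comp h k) = Defs.comp al a.
        by rewrite -k2a (Defs.compA h) Hal -(Defs.compA k2) (Defs.compA e) ek2 comp1m.
      have -> : Defs.comp phi (Defs.comp h k) = Defs.comp f (Defs.comp psi (Defs.comp e (Defs.comp h k))).
        by rewrite ehk -{1}k2a (Defs.compA h) Hal -(Defs.compA k2) (Defs.compA phi) -fpsi -Defs.compA.
      by rewrite -k'b (Defs.compA h) Hal' -(Defs.compA k') (Defs.compA e) (Defs.compA psi) pek' !comp0m compm0.
    have [u [ku _]] := kerk.2 _ _ Z.
    by exists u.
- move=> M1 M M2 N f g [kerf cokg] R1 R2 phi Q c cokc.
  have gepi := cokernel_epi cokg.
  have cepi := cokernel_epi cokc.
  have [Q1 [c1 cc1]] := Hcok _ _ (Defs.comp phi f).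
  have [[e1 ce1] fi1] := R1 _ _ _ cc1.
  have c1pf : Defs.comp (Defs.comp c1 phi) f = 0 by rewrite -Defs.compA; exact: cc1.1.
  have [psi [psig _]] := cokg.2 _ _ c1pf.
  have [Q' [c' cc']] := Hcok _ _ (Defs.comp e1 psi).
  have [[e' ce'] fi'] := R2 _ _ _ cc'.
  have cpf : Defs.comp c (Defs.comp phi f) = 0 by rewrite Defs.compA cokc.1 comp0m.
  have [a [ac1 _]] := cc1.2 _ _ cpf.
  have ce : Defs.comp c e1 = a by rewrite -ac1 -Defs.compA ce1 compm1.
  have apsi : Defs.comp a psi = 0.
    apply gepi; rewrite comp0m -Defs.compA.
    transitivity (Defs.comp a (Defs.comp c1 phi)); first by congr (Defs.comp a _).
    rewrite Defs.compA ac1; exact: cokc.1.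
  have cep : Defs.comp c (Defs.comp e1 psi) = 0 by rewrite Defs.compA ce.
  have [b [bc' _]] := cc'.2 _ _ cep.
  have c'ep : Defs.comp (Defs.comp c' e1) psi = 0 by rewrite -Defs.compA; exact: cc'.1.
  split.
  + pose t := Defs.comp (Defs.comp (Defs.comp (Defs.comp (Defs.comp e1 c1) e') c') e1) c1.
    have Ht : Defs.comp t phi = 0.
      by rewrite /t -Defs.compA -psig Defs.compA -(Defs.compA _ c' e1)
        -(Defs.compA _ (Defs.comp c' e1) psi) c'ep compm0 comp0m.
    have [s [sc _]] := cokc.2 _ _ Ht.
    exists s; apply cepi; rewrite -Defs.compA sc comp1m /t.
    rewrite !Defs.compA ce ac1 -{1}bc' -(Defs.compA b c' e') ce' compm1.
    by rewrite bc' ce ac1.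
  + move=> h.
    have [al Hal] := fi1 h.
    have [al' Hal'] := fi' h.
    have Z : Defs.comp (Defs.comp c h) phi = 0.
      have hce : Defs.comp (Defs.comp c h) e1 = Defs.comp a al.
        by rewrite -ac1 -(Defs.compA a c1 h) Hal -(Defs.compA a _ e1) -(Defs.compA al c1 e1) ce1 compm1.
      have -> : Defs.comp (Defs.comp c h) phi = Defs.comp (Defs.comp (Defs.comp (Defs.comp c h) e1) psi) g.
        by rewrite hce -{1}ac1 -(Defs.compA a c1 h) Hal (Defs.compA a al c1) -Defs.compA -psig Defs.compA.
      by rewrite -bc' -(Defs.compA b c' h) Hal' (Defs.compA b) -(Defs.compA _ c' e1)
        -(Defs.compA _ (Defs.comp c' e1) psi) c'ep compm0 comp0m.
    have [u [uc _]] := cokc.2 _ _ Z.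
    by exists u.
Qed.
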